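(* Fix a class index $k$, an iteration $t$, data $S_1,\dots,S_N$, weights $r^{(t)}_{nk}\ge 0$, and a tuning parameter $\rho>0$. For a coefficient vector $\boldsymbol B_k\in\mathbb R^H$ let $\hat\mu^{(t)}_\phi(\boldsymbol B_k)$ be the solution $\mu$ of $$\sum_{n=1}^N r^{(t)}_{nk}\,L(S_n)\,\phi_\rho\Big(\log\mathrm{NHP}(S_n\mid\boldsymbol B_k)/L(S_n)-\mu\Big)=0.$$ Then the gradient $\varrho^{(t)}_k:=\frac{\partial\hat\mu^{(t)}_\phi(\boldsymbol B_k)}{\partial\boldsymbol B_k}\Big|_{\boldsymbol B_k^{(t-1)}}$ equals $$\sum_{n=1}^N\frac{r^{(t)}_{nk}w^{(t)}_{nk}}{\sum_{n'=1}^N r^{(t)}_{n'k}w^{(t)}_{n'k}L(S_{n'})}\cdot\frac{\partial\log\mathrm{NHP}(S_n\mid\boldsymbol B_k)}{\partial\boldsymbol B_k}\Big|_{\boldsymbol B_k^{(t-1)}},$$ where $w^{(t)}_{nk}=\phi_\rho'\Big(\log\mathrm{NHP}(S_n\mid\boldsymbol B^{(t-1)}_k)/L(S_n)-\hat\mu^{(t)}_\phi(\boldsymbol B^{(t-1)}_k)\Big)$.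
   Context: Event streams are observed over $L(S)$ periods of length $T$. Given periodic basis functions $\kappa_1,\dots,\kappa_H$ on $[0,T]$ (extended $T$-periodically) and $\boldsymbol B_k=(b_{k,1},\dots,b_{k,H})$, set $\lambda_k(t)=\sum_h b_{k,h}\kappa_h(t)$ and, for $S=(t_1,\dots,t_M)$, $\mathrm{NHP}(S\mid\boldsymbol B_k)=\prod_i\lambda_k(t_i)\exp\big(-\int_0^{L(S)T}\lambda_k(t)dt\big)$. The Catoni-type influence function is $\phi(x)=\log(1+x+x^2/2)$ for $0\le x\le 2$, $\phi(x)=\frac{0.032}{9}(x-9.5)^3+1.5+\log 5$ for $2<x\le 9.5$, $\phi(x)=1.5+\log 5$ for $x>9.5$, and $\phi(x)=-\phi(-x)$ for $x<0$; $\phi_\rho(x):=\rho^{-1}\phi(\rho x)$. *)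

(* Defs.v *)
From HB Require Import structures.
From mathcomp Require Import all_boot all_order all_algebra.
From mathcomp Require Import all_classical all_reals all_analysis.
Set Implicit Arguments. Unset Strict Implicit. Unset Printing Implicit Defensive.
Import Order.TTheory GRing.Theory Num.Theory.
Import numFieldNormedType.Exports.
Local Open Scope classical_set_scope.
Local Open Scope ring_scope.

Section Defs.
Variable R : realType.

(* Catoni-type influence function phi, on x >= 0 *)
Definition phi_pos (x : R) : R :=
  if x <= 2 then ln (1 + x + x ^+ 2 / 2)
  else if x <= 19 / 2 then (32 / 1000) / 9 * (x - 19 / 2) ^+ 3 + 3 / 2 + ln 5
  else 3 / 2 + ln 5.

Definition phi (x : R) : R := if 0 <= x then phi_pos x else - phi_pos (- x).

Definition phi_rho (rho : R) (x : R) : R := rho^-1 * phi (rho * x).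

(* lambda(t) = sum_h b_h kappa_h(t); kappa_h are given as T-periodic functions on R *)
Definition intensity (H : nat) (kappa : 'I_H -> R -> R) (B : 'rV[R]_H) (t : R) : R :=
  \sum_(h < H) B ord0 h * kappa h t.

Definition logNHP (H : nat) (kappa : 'I_H -> R -> R) (T : R) (L : nat)
    (S : seq R) (B : 'rV[R]_H) : R :=
  \sum_(ti <- S) ln (intensity kappa B ti)
  - \int[lebesgue_measure]_(x in `[0, L%:R * T]) intensity kappa B x.

Definition est_eq (N : nat) (rho : R) (r : 'I_N -> R) (L : 'I_N -> nat)
    (logl : 'I_N -> R) (mu : R) : R :=
  \sum_(n < N) r n * (L n)%:R * phi_rho rho (logl n / (L n)%:R - mu).

End Defs.

(* Main.v *)
Require Import Defs.
From HB Require Import structures.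
From mathcomp Require Import all_boot all_order all_algebra.
From mathcomp Require Import all_classical all_reals all_analysis measurable_realfun.
From mathcomp Require Import ring lra.
Import Order.TTheory GRing.Theory Num.Theory.
Import numFieldNormedType.Exports.
Local Open Scope classical_set_scope.
Local Open Scope ring_scope.

Section A.
Variable R : realType.

Lemma glue (f g k : R -> R) (y d e : R) : 0 < e ->
  (forall x, y - e < x <= y -> f x = g x) ->
  (forall x, y <= x < y + e -> f x = k x) ->
  is_derive y 1 g d -> is_derive y 1 k d -> derivable f y 1.
Proof.
move=> e0 Hg Hk dg dk.
have fyg : f y = g y by apply: Hg; apply/andP; split; lra.
have fyk : f y = k y by apply: Hk; apply/andP; split; lra.
have cg : (fun h => h^-1 *: ((g \o shift y) (h *: 1) - g y)) @ 0^' --> d.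
  by case: dg => dg <-; exact: dg.
have ck : (fun h => h^-1 *: ((k \o shift y) (h *: 1) - k y)) @ 0^' --> d.
  by case: dk => dk <-; exact: dk.
apply/cvg_ex; exists d; apply/cvgrPdist_lt => eps eps0.
move/cvgrPdist_lt: cg => /(_ eps eps0) cg.
move/cvgrPdist_lt: ck => /(_ eps eps0) ck.
near=> h.
have hlt : `|h| < e by near: h; exact: dnbhs0_lt.
have Hgh : `|d - h^-1 *: ((g \o shift y) h%:A - g y)| < eps by near: h; exact: cg.
have Hkh : `|d - h^-1 *: ((k \o shift y) h%:A - k y)| < eps by near: h; exact: ck.
have hA : h%:A = h :> R by rewrite /GRing.scale /= mulr1.
move: Hgh Hkh; rewrite /= hA.
move: hlt; rewrite ltr_norml => /andP[h1 h2].
case: (leP h 0) => h0.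
  by rewrite Hg ?fyg; last (apply/andP; split; lra).
by rewrite Hk ?fyk; last (apply/andP; split; lra).
Unshelve. all: by end_near.
Qed.


Definition g1 (x : R) := ln (1 + x + x ^+ 2 / 2).
Definition g2 (x : R) := (32 / 1000) / 9 * (x - 19 / 2) ^+ 3 + 3 / 2 + ln 5.
Definition g3 (x : R) := 3 / 2 + ln (5 : R).

Lemma p_gt0 (x : R) : 0 < 1 + x + x ^+ 2 / 2.
Proof. nra. Qed.

Lemma dp (y : R) : is_derive y 1 (fun x : R => 1 + x + x ^+ 2 / 2) (1 + y).
Proof.
by apply: is_derive_eq; rewrite /GRing.scale /=; field.
Qed.

Lemma dg1 (y : R) : is_derive y 1 g1 ((1 + y + y ^+ 2 / 2)^-1 * (1 + y)).
Proof.
have := (@is_derive1_comp _ (@ln R) (fun x : R => 1 + x + x ^+ 2 / 2) y _ _ (is_derive1_ln (p_gt0 y)) (dp y)).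
by [].
Qed.

Lemma dg2 (y : R) : is_derive y 1 g2 ((32 / 1000) / 9 * (3 * (y - 19/2) ^+ 2)).
Proof.
rewrite /g2; apply: is_derive_eq; rewrite /GRing.scale /=; ring.
Qed.

Lemma dg3 (y : R) : is_derive y 1 g3 0.
Proof. exact: is_derive_cst. Qed.

Lemma g12 : g1 2 = g2 2.
Proof.
rewrite /g1 /g2.
have -> : 1 + 2 + 2 ^+ 2 / 2 = 5 :> R by rewrite expr2; lra.
have -> : (2 - 19 / 2) ^+ 3 = - (3375 / 8) :> R by rewrite !exprS expr0; lra.
lra.
Qed.

Lemma g23 : g2 (19/2) = g3 (19/2).
Proof. rewrite /g2 /g3 subrr expr0n /=; lra. Qed.

Lemma phi_pos_der (y : R) : derivable (@phi_pos R) y 1.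
Proof.
case: (ltgtP y 2) => [y2|y2|->].
- apply: (@glue _ g1 g1 y _ (2 - y)) (dg1 y) (dg1 y); first lra.
  + move=> x /andP[_ xy]; rewrite /phi_pos ifT //; lra.
  + move=> x /andP[_ xy]; rewrite /phi_pos ifT //; lra.
- case: (ltgtP y (19/2)) => [y3|y3|->].
  + pose e := Num.min (y - 2) (19/2 - y).
    have e1 : e <= y - 2 by rewrite /e ge_min lexx.
    have e2 : e <= 19/2 - y by rewrite /e ge_min lexx orbT.
    have e0 : 0 < e by rewrite /e lt_min; apply/andP; split; lra.
    clearbody e.
    apply: (@glue _ g2 g2 y _ e) (dg2 y) (dg2 y) => //.
    * move=> x /andP[x1 x2]; rewrite /phi_pos ifF; last (apply/negbTE; rewrite -ltNge; lra).
      rewrite ifT //; lra.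
    * move=> x /andP[x1 x2]; rewrite /phi_pos ifF; last (apply/negbTE; rewrite -ltNge; lra).
      rewrite ifT //; lra.
  + apply: (@glue _ g3 g3 y _ (y - 19/2)) (dg3 y) (dg3 y); first lra.
    * move=> x /andP[x1 x2]; rewrite /phi_pos ifF; last (apply/negbTE; rewrite -ltNge; lra).
      rewrite ifF //; apply/negbTE; rewrite -ltNge; lra.
    * move=> x /andP[x1 x2]; rewrite /phi_pos ifF; last (apply/negbTE; rewrite -ltNge; lra).
      rewrite ifF //; apply/negbTE; rewrite -ltNge; lra.
  + have d2 : is_derive (19/2 : R) 1 g2 0.
      by have := dg2 (19/2); rewrite subrr expr0n /= !mulr0.
    apply: (@glue _ g2 g3 _ _ 1) d2 (dg3 _); first lra.
    * move=> x /andP[x1 x2]; rewrite /phi_pos ifF; last (apply/negbTE; rewrite -ltNge; lra).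
      by rewrite ifT.
    * move=> x /andP[x1 x2]; rewrite /phi_pos ifF; last (apply/negbTE; rewrite -ltNge; lra).
      case: (leP x (19/2)) => x3; last by [].
      have -> : x = 19/2 by apply/eqP; rewrite eq_le x3 x1.
      exact: g23.
- have d1 : is_derive (2 : R) 1 g1 (3/5).
    by have := dg1 2; have -> : (1 + 2 + 2 ^+ 2 / 2)^-1 * (1 + 2) = 3/5 :> R by rewrite expr2; field.
  have d2 : is_derive (2 : R) 1 g2 (3/5).
    by have := dg2 2; have -> : 32 / 1000 / 9 * (3 * (2 - 19 / 2) ^+ 2) = 3/5 :> R by rewrite expr2; field.
  apply: (@glue _ g1 g2 _ _ 1) d1 d2; first lra.
  + by move=> x /andP[x1 x2]; rewrite /phi_pos ifT.
  + move=> x /andP[x1 x2]; rewrite /phi_pos.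
    case: (leP x 2) => x3.
      have -> : x = 2 by apply/eqP; rewrite eq_le x3 x1.
      exact: g12.
    rewrite ifT //; lra.
Qed.

Lemma negphi_der (y : R) : is_derive y 1 (fun x => - @phi_pos R (- x)) ('D_1 (@phi_pos R) (- y)).
Proof.
have h1 := derivableP (phi_pos_der (- y)).
have h2 : is_derive y 1 (fun x : R => - x) (-1).
  by apply: is_derive_eq.
have h3 := is_derive1_comp h1 h2.
have h4 := is_deriveN h3.
by rewrite mulrN1 opprK in h4.
Qed.

Lemma phi_der (y : R) : derivable (@phi R) y 1.
Proof.
case: (ltgtP y 0) => [y0|y0|->].
- apply: (@glue _ (fun x => - @phi_pos R (- x)) (fun x => - @phi_pos R (- x)) y _ (- y)) (negphi_der y) (negphi_der y); first lra.
  + move=> x /andP[_ xy]; rewrite /phi ifF //; apply/negbTE; rewrite -ltNge; lra.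
  + move=> x /andP[_ xy]; rewrite /phi ifF //; apply/negbTE; rewrite -ltNge; lra.
- have h := derivableP (phi_pos_der y).
  apply: (@glue _ _ _ y _ y _ _ _ h h); first lra.
  + move=> x /andP[xy _]; rewrite /phi ifT //; lra.
  + move=> x /andP[xy _]; rewrite /phi ifT //; lra.
- have h := derivableP (phi_pos_der 0).
  have h' := negphi_der 0; rewrite oppr0 in h'.
  have p0 : @phi_pos R 0 = 0 by rewrite /phi_pos ifT ?expr0n /= ?addr0 ?mul0r ?addr0 ?ln1 //; lra.
  apply: (@glue _ _ _ 0 _ 1 _ _ _ h' h); first lra.
  + move=> x /andP[_ x0]; rewrite /phi.
    case: (leP 0 x) => x0'; last by [].
    have -> : x = 0 by apply/eqP; rewrite eq_le x0 x0'.
    by rewrite oppr0 p0 oppr0.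
  + by move=> x /andP[x0 _]; rewrite /phi ifT.
Qed.

Lemma phi_rho_der (rho y : R) : derivable (phi_rho rho) y 1.
Proof.
have h1 := derivableP (phi_der (rho * y)).
have h2 : is_derive y 1 (fun x : R => rho * x) rho.
  by apply: is_derive_eq; rewrite /GRing.scale /=; ring.
have h3 := is_derive1_comp h1 h2.
have h4 := is_deriveZ (rho^-1) h3.
by case: h4.
Qed.

End A.

Section B.
Variable R : realType.
Local Notation mu := (@lebesgue_measure R).

Lemma mshift (c : R) : measurable_fun [set: R] (fun x : R => x + c).
Proof. exact: (measurable_realfun.measurable_funD (f := id) (g := cst c)). Qed.

Lemma mshift' (c : R) : measurable_fun (T := measurableTypeR R) (U := measurableTypeR R) [set: R] (fun x : R => x + c).
Proof. exact: mshift c. Qed.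

Lemma lebesgue_measure_shift (c : R) (A : set R) : measurable A ->
  pushforward mu (fun x : measurableTypeR R => x + c) A = mu A.
Proof.
move=> mA.
have := @lebesgue_measure_unique R (measure_function_pushforward__canonical__measure_function_Measure mu (mshift' c)).
move=> /(_ _ A mA) /= H; apply/esym; rewrite H //.
move=> _ [[a b]] _ <-.
rewrite /pushforward /=.
have -> : (fun x : R => x + c) @^-1` `]a, b] = `]a - c, b - c]%classic.
  apply/seteqP; split => x /=; rewrite !(@in_itv _ R) /= => /andP[h1 h2]; apply/andP; split; lra.
rewrite !lebesgue_measure_itv /= !lte_fin.
have -> : (a - c < b - c) = (a < b) by rewrite ltrD2r.
by case: ifP => // _; rewrite -EFinD; congr EFin; ring.
Qed.

Lemma integrable_shift (c : R) (F : measurableTypeR R -> \bar R) :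
  measurable_fun [set: measurableTypeR R] F ->
  mu.-integrable [set: measurableTypeR R] (F \o (fun x => x + c)) -> mu.-integrable [set: measurableTypeR R] F.
Proof.
move=> mF iF.
have := @integrable_pushforward _ _ (measurableTypeR R) (measurableTypeR R) R (fun x => x + c) (mshift' c) mu setT F mF.
rewrite preimage_setT => /(_ iF measurableT).
move/integrableP => [mF' iF']; apply/integrableP; split => //.
rewrite (eq_measure_integral (measure_function_pushforward__canonical__measure_function_Measure mu (mshift' c))) //.
by move=> A mA _ /=; apply/esym; apply: lebesgue_measure_shift.
Qed.

Lemma per_nat (g : R -> R) (T : R) (k : nat) : (forall t, g (t + T) = g t) ->
  forall t, g (t + k%:R * T) = g t.
Proof.
move=> gT t; elim: k => [|k IH]; first by rewrite mul0r addr0.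
by rewrite mulrSr mulrDl mul1r addrA gT IH.
Qed.

Lemma integrable_periodic (g : R -> R) (T : R) (k : nat) :
  (forall t, g (t + T) = g t) ->
  mu.-integrable `[0, T] (EFin \o g) ->
  mu.-integrable `[k%:R * T, k%:R * T + T] (EFin \o g).
Proof.
move=> gT.
set c := k%:R * T.
have gc : forall t, g (t + c) = g t by exact: per_nat.
move=> I0; have {I0}I0 := iffLR (@integrable_mkcond _ (measurableTypeR R) R mu `[0, T] (EFin \o g) (measurable_itv _)) I0.
apply: (iffRL (@integrable_mkcond _ (measurableTypeR R) R mu `[c, c + T] (EFin \o g) (measurable_itv _))).
set G := (EFin \o g) \_ `[0, T].
have mG : measurable_fun [set: measurableTypeR R] G.
  by case/integrableP: I0.
pose F := fun y : R => G (y - c).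
have mF : measurable_fun [set: measurableTypeR R] F.
  apply: (measurableT_comp mG); exact: mshift'.
have iF : mu.-integrable [set: measurableTypeR R] F.
  apply: (@integrable_shift c F mF).
  apply: (eq_integrable measurableT _ _ _ I0) => x _ /=.
  by rewrite /F addrK.
apply: (eq_integrable measurableT _ _ _ iF) => x _.
rewrite /F /G /patch /=.
have -> : (x - c \in `[0, T]%classic) = (x \in `[c, c + T]%classic).
  rewrite !mem_setE !in_itv /=.
  apply/idP/idP => /andP[h1 h2]; apply/andP; split; lra.
have -> : g x = g (x - c) by rewrite -{1}(subrK c x) gc.
by [].
Qed.

Lemma integrableU_disj (A B : set (measurableTypeR R)) (f : measurableTypeR R -> \bar R) :
  measurable A -> measurable B -> (forall x, A x -> B x -> False) ->
  mu.-integrable A f -> mu.-integrable B f -> mu.-integrable (A `|` B) f.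
Proof.
move=> mA mB AB iA iB.
have {iA}iA := iffLR (@integrable_mkcond _ (measurableTypeR R) R mu A f mA) iA.
have {iB}iB := iffLR (@integrable_mkcond _ (measurableTypeR R) R mu B f mB) iB.
apply: (iffRL (@integrable_mkcond _ (measurableTypeR R) R mu (A `|` B) f (measurableU _ _ mA mB))).
apply: (eq_integrable measurableT _ _ _ (integrableD measurableT iA iB)) => x _ /=.
rewrite /patch.
case: (boolP (x \in A)) => xA; case: (boolP (x \in B)) => xB.
- by exfalso; apply: (AB x); [move: xA; rewrite inE|move: xB; rewrite inE].
- by rewrite mem_set ?adde0 //; left; move: xA; rewrite inE.
- by rewrite mem_set ?add0e //; right; move: xB; rewrite inE.
- rewrite memNset ?adde0 //; move=> [xA'|xB'].
  + by move: xA; rewrite mem_set.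
  + by move: xB; rewrite mem_set.
Qed.

Lemma integrable_upto (g : R -> R) (T : R) (L : nat) : 0 < T ->
  (forall t, g (t + T) = g t) ->
  mu.-integrable `[0, T] (EFin \o g) ->
  mu.-integrable `[0, L%:R * T] (EFin \o g).
Proof.
move=> T0 gT i0; elim: L => [|L IH].
  apply: (integrableS _ _ _ i0); [exact: measurable_itv|exact: measurable_itv|].
  by move=> x /=; rewrite !(@in_itv _ R) /= mul0r => /andP[h1 h2]; apply/andP; split; lra.
have iB : mu.-integrable `]L%:R * T, L%:R * T + T] (EFin \o g).
  apply: (integrableS _ _ _ (@integrable_periodic g T L gT i0)); [exact: measurable_itv|exact: measurable_itv|].
  by move=> x /=; rewrite !(@in_itv _ R) /= => /andP[h1 h2]; apply/andP; split; lra.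
have LT0 : 0 <= L%:R * T by apply: mulr_ge0 => //; exact: ltW.
have -> : `[0, L.+1%:R * T]%classic = `[0, L%:R * T]%classic `|` `]L%:R * T, L%:R * T + T]%classic :> set (measurableTypeR R).
  apply/seteqP; split => x /=; rewrite !(@in_itv _ R) /= mulrSr mulrDl mul1r.
    move=> /andP[h1 h2]; case: (leP x (L%:R * T)) => h3; [left|right]; apply/andP; split; lra.
  by move=> [|]; rewrite /= ?(@in_itv _ R) /= => /andP[h1 h2]; apply/andP; split; lra.
apply: (@integrableU_disj _ _ _ _ _ _ IH iB).
- exact: measurable_itv.
- exact: measurable_itv.
- by move=> x /=; rewrite !(@in_itv _ R) /= => /andP[h1 h2] /andP[h3 h4]; lra.
Qed.
End B.

Section C.
Variable R : realType.

Lemma dirQ (H : nat) (f : 'rV[R]_H -> R) (B0 v : 'rV[R]_H) :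
  (fun h : R => h^-1 *: (((fun s : R => f (s *: v + B0)) \o shift 0) (h *: 1) - (fun s : R => f (s *: v + B0)) 0))
  = (fun h : R => h^-1 *: ((f \o shift B0) (h *: v) - f B0)).
Proof.
apply/funext => h /=.
have -> : h *: (1 : R) + 0 = h by rewrite addr0 /GRing.scale /= mulr1.
by rewrite scale0r add0r.
Qed.

Lemma dir_derivable (H : nat) (f : 'rV[R]_H -> R) (B0 v : 'rV[R]_H) :
  derivable f B0 v -> derivable (fun s : R => f (s *: v + B0)) 0 1.
Proof. by rewrite /derivable dirQ. Qed.

Lemma dir_derive (H : nat) (f : 'rV[R]_H -> R) (B0 v : 'rV[R]_H) :
  'D_v f B0 = 'D_1 (fun s : R => f (s *: v + B0)) 0.
Proof. by rewrite /derive dirQ. Qed.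

Lemma is_derive_seqsum (x : R) (s : seq R) (F : R -> R -> R) (dF : R -> R) :
  (forall t, t \in s -> is_derive x 1 (F t) (dF t)) ->
  is_derive x 1 (fun y => \sum_(t <- s) F t y) (\sum_(t <- s) dF t).
Proof.
elim: s => [|a s IH] Hs.
  rewrite big_nil.
  have -> : (fun y : R => \sum_(t <- [::]) F t y) = cst 0 by apply/funext => y; rewrite big_nil.
  exact: is_derive_cst.
rewrite big_cons.
have -> : (fun y : R => \sum_(t <- a :: s) F t y) = F a + (fun y => \sum_(t <- s) F t y).
  by apply/funext => y; rewrite big_cons.
apply: is_deriveD; first by apply: Hs; rewrite inE eqxx.
by apply: IH => t ts; apply: Hs; rewrite inE ts orbT.
Qed.

Lemma intensity_dir (H : nat) (kappa : 'I_H -> R -> R) (B0 : 'rV[R]_H) (h : 'I_H) (s t : R) :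
  intensity kappa (s *: delta_mx ord0 h + B0) t = intensity kappa B0 t + s * kappa h t.
Proof.
rewrite /intensity.
rewrite (eq_bigr (fun h' => B0 ord0 h' * kappa h' t + s * ((h' == h)%:R * kappa h' t))); last first.
  by move=> h' _; rewrite !mxE eqxx /= mulrDl addrC mulrA.
rewrite big_split /= -mulr_sumr; congr (_ + _ * _).
rewrite (bigD1 h) //= eqxx mul1r big1 ?addr0 //.
by move=> i /negbTE ->; rewrite mul0r.
Qed.


Lemma is_derive_aff (x a c : R) : is_derive x 1 (fun s : R => a + s * c) c.
Proof. by apply: is_derive_eq; rewrite /GRing.scale /=; ring. Qed.

Lemma intensity_int (H : nat) (kappa : 'I_H -> R -> R) (B : 'rV[R]_H) (D : set (measurableTypeR R)) :
  measurable D ->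
  (forall h', lebesgue_measure.-integrable D (EFin \o kappa h')) ->
  lebesgue_measure.-integrable D (EFin \o intensity kappa B).
Proof.
move=> mD Hk.
have := eq_integrable mD (fun x => (\sum_(i < H) (B ord0 i)%:E * (kappa i x)%:E)%E) (EFin \o intensity kappa B).
move=> HH; apply: HH.
  by move=> x _ /=; rewrite /intensity -sumEFin; apply: eq_bigr => i _; rewrite EFinM.
apply: integrable_sum => // i _.
exact: (integrableZl mD (B ord0 i) (Hk i)).
Qed.

Lemma logNHP_dir (H : nat) (kappa : 'I_H -> R -> R) (T : R) (L : nat) (S : seq R)
    (B0 : 'rV[R]_H) (h : 'I_H) :
  (forall h', lebesgue_measure.-integrable `[0, L%:R * T] (EFin \o kappa h')) ->
  (forall ti, ti \in S -> 0 < intensity kappa B0 ti) ->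
  derivable (fun s : R => logNHP kappa T L S (s *: delta_mx ord0 h + B0)) 0 1.
Proof.
move=> Hk Hpos.
have mD : measurable (`[0, L%:R * T] : set (measurableTypeR R)) by exact: measurable_itv.
set I0 := \int[lebesgue_measure]_(x in `[0, L%:R * T]) intensity kappa B0 x.
set J := \int[lebesgue_measure]_(x in `[0, L%:R * T]) kappa h x.
have E : (fun s : R => logNHP kappa T L S (s *: delta_mx ord0 h + B0)) =
    (fun s => \sum_(ti <- S) ln (intensity kappa B0 ti + s * kappa h ti)) - (fun s => I0 + s * J).
  apply/funext => s; rewrite /logNHP /=.
  under eq_bigr => ti _ do rewrite intensity_dir.
  congr (_ - _).
  under eq_Rintegral => x _ do rewrite intensity_dir.
  rewrite RintegralD //; last first.
    exact: (integrableZl mD s (Hk h)).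
    exact: intensity_int.
  by rewrite RintegralZl.
rewrite E.
have HS : is_derive (0 : R) 1 (fun s : R => \sum_(ti <- S) ln (intensity kappa B0 ti + s * kappa h ti))
    (\sum_(ti <- S) ((intensity kappa B0 ti + 0 * kappa h ti)^-1 * kappa h ti)).
  apply: is_derive_seqsum => t tS.
  apply: (@is_derive1_comp _ (@ln R) (fun s : R => intensity kappa B0 t + s * kappa h t) 0 _ _ _ (is_derive_aff _ _ _)).
  apply: is_derive1_ln.
  by rewrite mul0r addr0; exact: Hpos.
by case: (is_deriveB HS (is_derive_aff 0 I0 J)).
Qed.
End C.

Theorem proposition2 (R : realType) (N H : nat) (T rho : R)
  (kappa : 'I_H -> R -> R) (S : 'I_N -> seq R) (L : 'I_N -> nat)
  (r : 'I_N -> R) (muhat : 'rV[R]_H -> R) (B0 : 'rV[R]_H) :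
  0 < T -> 0 < rho ->
  (forall n, (0 < L n)%N) ->
  (forall n, 0 <= r n) ->
  (forall n ti, ti \in S n -> 0 <= ti <= (L n)%:R * T) ->
  (forall h t, kappa h (t + T) = kappa h t) ->
  (forall h, lebesgue_measure.-integrable `[0, T] (EFin \o kappa h)) ->
  (forall n ti, ti \in S n -> 0 < intensity kappa B0 ti) ->
  (\forall B \near B0,
     est_eq rho r L (fun n => logNHP kappa T (L n) (S n) B) (muhat B) = 0) ->
  (forall h : 'I_H, derivable muhat B0 (delta_mx ord0 h)) ->
  let w n := derive1 (phi_rho rho)
               (logNHP kappa T (L n) (S n) B0 / (L n)%:R - muhat B0) in
  let D := \sum_(n < N) r n * w n * (L n)%:R in
  D != 0 ->
  forall h : 'I_H,
    'D_(delta_mx ord0 h) muhat B0 =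
    \sum_(n < N) (r n * w n / D) *
       'D_(delta_mx ord0 h) (logNHP kappa T (L n) (S n)) B0.
Proof.
move=> T0 rho0 HL Hr HS Hper Hint Hpos Hnear Hder w D HD h.
set v := delta_mx ord0 h.
have Hk : forall n h', lebesgue_measure.-integrable `[0, (L n)%:R * T] (EFin \o kappa h').
  by move=> n h'; exact: (@integrable_upto _ (kappa h') T (L n) T0 (Hper h') (Hint h')).
pose l n := fun s : R => logNHP kappa T (L n) (S n) (s *: v + B0).
pose m := fun s : R => muhat (s *: v + B0).
have dl : forall n, is_derive (0 : R) 1 (l n) ('D_v (logNHP kappa T (L n) (S n)) B0).
  move=> n; rewrite dir_derive; apply: derivableP; rewrite /l /v; apply: logNHP_dir; [exact: Hk | exact: Hpos].
have dm : is_derive (0 : R) 1 m ('D_v muhat B0).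
  rewrite dir_derive; apply: derivableP; rewrite /m /v; apply: dir_derivable; exact: Hder.
pose a n := fun s : R => l n s / (L n)%:R - m s.
have da : forall n, is_derive (0 : R) 1 (a n)
    ((L n)%:R^-1 *: 'D_v (logNHP kappa T (L n) (S n)) B0 - 'D_v muhat B0).
  move=> n.
  have -> : a n = ((L n)%:R^-1 \*: l n) - m.
    by apply/funext => s; rewrite /a /= /GRing.scale /= mulrC.
  exact: is_deriveB (is_deriveZ _ (dl n)) dm.
have a0 : forall n, a n 0 = logNHP kappa T (L n) (S n) B0 / (L n)%:R - muhat B0.
  by move=> n; rewrite /a /l /m scale0r add0r.
set dm' := 'D_v muhat B0.
set dl' := fun n => 'D_v (logNHP kappa T (L n) (S n)) B0.
have dE : forall n : 'I_N, is_derive (0 : R) 1 (fun s => r n * (L n)%:R * phi_rho rho (a n s))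
    ((r n * (L n)%:R) *: (w n * ((L n)%:R^-1 *: dl' n - dm'))).
  move=> n.
  have hp := derivableP (@phi_rho_der _ rho (a n 0)).
  have hc := is_derive1_comp hp (da n).
  have := is_deriveZ (r n * (L n)%:R) hc.
  by rewrite /w derive1E -(a0 n).
have dEs := is_derive_sum dE.
rewrite fct_sumE in dEs.
have c1 : (fun s : R => s *: v + B0) @ (0 : R) --> B0.
  suff : (fun s : R => s *: v + B0) @ (0 : R) --> 0 *: v + B0 by rewrite scale0r add0r.
  apply: cvgD; last exact: cvg_cst.
  apply: cvgZl; exact: cvg_id.
have Hn0 : \forall s \near (0 : R), est_eq rho r L
    (fun n => logNHP kappa T (L n) (S n) (s *: v + B0)) (muhat (s *: v + B0)) = 0.
  exact: c1 _ Hnear.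
have Hn1 : \forall s \near (0 : R),
    (fun x : R => \sum_(n < N) r n * (L n)%:R * phi_rho rho (a n x)) s = cst 0 s.
  move: Hn0; apply: filterS => s /=.
  by rewrite /est_eq.
have dE0 := near_eq_is_derive Hn1 dEs.
have e0 : \sum_(n < N) (r n * (L n)%:R) *: (w n * ((L n)%:R^-1 *: dl' n - dm')) = 0.
  by case: dE0 => _ <-; exact: derive_cst.
have e1 : \sum_(n < N) r n * w n * dl' n - dm' * D = 0.
  rewrite -[X in _ = X]e0 /D mulr_sumr -sumrB; apply: eq_bigr => n _.
  have Ln : (L n)%:R != 0 :> R by rewrite pnatr_eq0 -lt0n HL.
  rewrite /GRing.scale /=; field.
  exact: Ln.
apply: (mulIf HD).
rewrite mulr_suml.
move/eqP: e1; rewrite subr_eq0 => /eqP <-.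
apply: eq_bigr => n _.
rewrite /dl' /=; field; exact: HD.
Qed.
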